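(* Let $m>0$ and let $U_0=\frac12\ln(1-\frac{2m}{r})$, expressed in Weyl coordinates via $\rho=r\sin\theta\sqrt{1-2m/r}$, $z=(r-m)\cos\theta$ ($r>2m$, $\theta\in[0,\pi]$), and set $x=r/m-1$. Let the body surface be $r=r_0>2m$, i.e. $x_0=r_0/m-1$, so that $z_S=-mx_0$, $z_N=mx_0$. Then for every $y\in(-mx_0,mx_0)$ the unique solution $Z_y$ of $dZ_y=\cos\Upsilon_y\,dU_0+\sin\Upsilon_y\star dU_0$ on the exterior region $x>x_0$ vanishing at infinity is given by $$e^{-Z_y}=\frac{yx-m\cos\theta-\sqrt{m^2x^2+y^2-2mxy\cos\theta-m^2\sin^2\theta}}{(y-m)\sqrt{x^2-1}}$$ (with the limiting value obtained by continuity at $y=m$), and hence $$\Psi_y=\frac{\big(yx-m\cos\theta-\sqrt{m^2x^2+y^2-2mxy\cos\theta-m^2\sin^2\theta}\big)^2}{(y-m)^2(x+1)^2\sqrt{m^2x^2+y^2-2mxy\cos\theta-m^2\sin^2\theta}},\qquad \psi_y=\frac{1}{\sqrt{m^2x^2+y^2-2mxy\cos\theta-m^2\sin^2\theta}}.$$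
   Context: $\mathbb{E}^3$ has cylindrical (Weyl) coordinates $(\rho,z,\phi)$ and flat metric $\gamma=d\rho^2+dz^2+\rho^2d\phi^2$. On the half-plane $\mathbb{K}=\{(\rho,z):\rho\ge0\}$ with metric $d\rho^2+dz^2$, the Hodge star is fixed by $\star d\rho=-dz$, $\star dz=d\rho$. For a constant $y$, $\Upsilon_y\in[0,2\pi)$ is defined by $\cos\Upsilon_y=(z-y)/\sqrt{\rho^2+(z-y)^2}$, $\sin\Upsilon_y=\rho/\sqrt{\rho^2+(z-y)^2}$; $\psi_y=1/\sqrt{\rho^2+(z-y)^2}$ and $\Psi_y=e^{2U_0-2Z_y}/\sqrt{\rho^2+(z-y)^2}$. *)

(* Defs.v *)
From Stdlib Require Import Reals Lra.
From Coquelicot Require Import Coquelicot.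
Open Scope R_scope.

Definition weyl_rho (m r th : R) : R := r * sin th * sqrt (1 - 2 * m / r).
Definition weyl_z (m r th : R) : R := (r - m) * cos th.

Definition exterior (m r0 rho z : R) : Prop :=
  exists r th, r0 < r /\ 0 <= th <= PI /\ rho = weyl_rho m r th /\ z = weyl_z m r th.

(* Distance to the axis point (0,y), and Upsilon_y via its cosine and sine. *)
Definition dist_y (y rho z : R) : R := sqrt (rho ^ 2 + (z - y) ^ 2).
Definition cosUps (y rho z : R) : R := (z - y) / dist_y y rho z.
Definition sinUps (y rho z : R) : R := rho / dist_y y rho z.

(* 1-forms on K:  (a, b) stands for a d rho + b dz. *)
Definition form := (R * R)%type.
Definition dfun (f : R -> R -> R) (rho z : R) : form :=
  (Derive (fun s => f s z) rho, Derive (fun t => f rho t) z).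
(* Hodge star with  *d rho = - dz,  *dz = d rho :  *(a drho + b dz) = b drho - a dz *)
Definition hstar (w : form) : form := (snd w, - fst w).
Definition fadd (w1 w2 : form) : form := (fst w1 + fst w2, snd w1 + snd w2).
Definition fscal (c : R) (w : form) : form := (c * fst w, c * snd w).

Definition is_Zsol (m r0 : R) (U0 : R -> R -> R) (y : R) (Z : R -> R -> R) : Prop :=
  (forall rho z, exterior m r0 rho z -> 0 < rho ->
     let w := fadd (fscal (cosUps y rho z) (dfun U0 rho z))
                   (fscal (sinUps y rho z) (hstar (dfun U0 rho z))) in
     is_derive (fun s => Z s z) rho (fst w) /\
     is_derive (fun t => Z rho t) z (snd w)) /\
  (forall eps, 0 < eps -> exists M, forall rho z, exterior m r0 rho z ->
     M < rho ^ 2 + z ^ 2 -> Rabs (Z rho z) < eps).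

Definition Psi (U0 Z : R -> R -> R) (y rho z : R) : R :=
  exp (2 * U0 rho z - 2 * Z rho z) / dist_y y rho z.
Definition psi (y rho z : R) : R := 1 / dist_y y rho z.

Definition Dxy (m y x th : R) : R :=
  sqrt (m ^ 2 * x ^ 2 + y ^ 2 - 2 * m * x * y * cos th - m ^ 2 * (sin th) ^ 2).
Definition Nxy (m y x th : R) : R := y * x - m * cos th - Dxy m y x th.
Definition eZ_formula (m y x th : R) : R :=
  Nxy m y x th / ((y - m) * sqrt (x ^ 2 - 1)).
Definition Psi_formula (m y x th : R) : R :=
  (Nxy m y x th) ^ 2 / ((y - m) ^ 2 * (x + 1) ^ 2 * Dxy m y x th).
Definition psi_formula (m y x th : R) : R := 1 / Dxy m y x th.

(* Main.v *)
Require Import Defs.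
From Stdlib Require Import Reals Lra.
From Coquelicot Require Import Coquelicot.
Open Scope R_scope.

Definition aa m rho z := sqrt (rho^2 + (z+m)^2).
Definition bb m rho z := sqrt (rho^2 + (z-m)^2).
Definition XX m rho z := (aa m rho z + bb m rho z)/(2*m).
Definition CC m rho z := (aa m rho z - bb m rho z)/(2*m).

Lemma sq_sqrt' (u : R) : 0 <= u -> sqrt u ^ 2 = u.
Proof. intros; rewrite <- Rsqr_pow2; apply Rsqr_sqrt; auto. Qed.

Lemma sqrt_gt_abs (rho w : R) : 0 < rho -> Rabs w < sqrt (rho^2 + w^2).
Proof.
  intros h. assert (hp : 0 < rho^2 + w^2) by nra.
  set (s := sqrt _). assert (hs : s^2 = rho^2+w^2) by (apply sq_sqrt'; lra).
  assert (0 < s) by (apply sqrt_lt_R0; lra).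
  destruct (Rcase_abs w); [rewrite Rabs_left|rewrite Rabs_right]; try lra; nra.
Qed.

Lemma ab_facts (m rho z : R) : 0 < m -> 0 < rho ->
  0 < aa m rho z /\ 0 < bb m rho z /\
  aa m rho z ^2 = rho^2 + (z+m)^2 /\ bb m rho z ^2 = rho^2 + (z-m)^2 /\
  2*m < aa m rho z + bb m rho z /\ aa m rho z - bb m rho z <= 2*m /\
  bb m rho z - aa m rho z <= 2*m.
Proof.
  intros hm hr. unfold aa, bb.
  pose proof (sqrt_gt_abs rho (z+m) hr). pose proof (sqrt_gt_abs rho (z-m) hr).
  assert (h1 : sqrt (rho ^ 2 + (z + m) ^ 2) ^2 = rho ^ 2 + (z + m) ^ 2) by (apply sq_sqrt'; apply Rplus_le_le_0_compat; apply pow2_ge_0).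
  assert (h2 : sqrt (rho ^ 2 + (z - m) ^ 2) ^2 = rho ^ 2 + (z - m) ^ 2) by (apply sq_sqrt'; apply Rplus_le_le_0_compat; apply pow2_ge_0).
  set (a := sqrt (rho ^ 2 + (z + m) ^ 2)) in *. set (b := sqrt (rho ^ 2 + (z - m) ^ 2)) in *.
  assert (0 <= Rabs (z+m)) by apply Rabs_pos.
  assert (0 <= Rabs (z-m)) by apply Rabs_pos.
  assert (Rabs (z+m) + Rabs (z-m) >= 2*m).
  { destruct (Rcase_abs (z+m)); destruct (Rcase_abs (z-m));
    try rewrite (Rabs_left (z+m)) by lra; try rewrite (Rabs_right (z+m)) by lra;
    try rewrite (Rabs_left (z-m)) by lra; try rewrite (Rabs_right (z-m)) by lra; lra. }
  pose proof (Rle_abs (z+m)). pose proof (Rle_abs (-(z+m))). rewrite Rabs_Ropp in *.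
  pose proof (Rle_abs (z-m)). pose proof (Rle_abs (-(z-m))). rewrite Rabs_Ropp in *.
  repeat split; try lra.
  -
    assert (a^2 <= (b + 2*m)^2) by nra. nra.
  - assert (b^2 <= (a + 2*m)^2) by nra. nra.
Qed.

Lemma weyl_rho2 (m r th : R) : 0 < m -> 2*m < r ->
  weyl_rho m r th ^ 2 = r^2 * (1 - cos th ^2) * (1 - 2*m/r).
Proof.
  intros hm hr. unfold weyl_rho.
  assert (hq : sqrt (1 - 2*m/r) ^2 = 1 - 2*m/r).
  { apply sq_sqrt'. assert (2*m/r < 1). { apply (Rmult_lt_reg_r r); try lra. field_simplify; lra. } lra. }
  pose proof (sin2_cos2 th) as hsc. unfold Rsqr in hsc.
  replace ((r * sin th * sqrt (1 - 2 * m / r)) ^ 2) with (r^2 * (sin th * sin th) * (sqrt (1 - 2 * m / r))^2) by ring.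
  rewrite hq. replace (sin th * sin th) with (1 - cos th ^2) by nra. ring.
Qed.

Lemma weyl_ab (m r th y : R) : 0 < m -> 2*m < r ->
  aa m (weyl_rho m r th) (weyl_z m r th) = r - m + m * cos th /\
  bb m (weyl_rho m r th) (weyl_z m r th) = r - m - m * cos th /\
  dist_y y (weyl_rho m r th) (weyl_z m r th) = Dxy m y (r/m - 1) th.
Proof.
  intros hm hr. pose proof (weyl_rho2 m r th hm hr) as h2.
  pose proof (COS_bound th) as [c1 c2].
  pose proof (sin2_cos2 th) as hsc. unfold Rsqr in hsc.
  unfold aa, bb, dist_y, Dxy, weyl_z. repeat split.
  - rewrite <- (sqrt_pow2 (r - m + m * cos th)) by nra. f_equal.
    rewrite h2. field. lra.
  - rewrite <- (sqrt_pow2 (r - m - m * cos th)) by nra. f_equal.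
    rewrite h2. field. lra.
  - f_equal. rewrite h2. replace (sin th ^2) with (1 - cos th ^2) by nra. field. lra.
Qed.

Lemma sq_eq_pos (u v : R) : 0 <= u -> 0 <= v -> u^2 = v^2 -> u = v.
Proof. intros. nra. Qed.

Lemma weyl_inv (m rho z : R) : 0 < m -> 0 < rho ->
  2*m < m + (aa m rho z + bb m rho z)/2 /\
  0 <= acos (CC m rho z) <= PI /\
  weyl_rho m (m + (aa m rho z + bb m rho z)/2) (acos (CC m rho z)) = rho /\
  weyl_z m (m + (aa m rho z + bb m rho z)/2) (acos (CC m rho z)) = z.
Proof.
  intros hm hr. destruct (ab_facts m rho z hm hr) as (ha0 & hb0 & ha & hb & hs & hd1 & hd2).
  assert (hC : -1 <= CC m rho z <= 1).
  { unfold CC; split; [apply (Rmult_le_reg_r (2*m)) | apply (Rmult_le_reg_r (2*m))]; try lra;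
    field_simplify; lra. }
  unfold CC in *. set (a := aa m rho z) in *. set (b := bb m rho z) in *.
  repeat split; try lra; try apply acos_bound.
  - unfold weyl_rho. rewrite sin_acos by lra.
    set (r := m + (a+b)/2).
    assert (hr2 : 2*m < r) by (unfold r; lra).
    assert (h1 : 0 <= 1 - ((a - b) / (2 * m))²).
    { unfold Rsqr. assert (-1 <= (a-b)/(2*m) <= 1) by lra. nra. }
    assert (h2 : 0 <= 1 - 2*m/r).
    { assert (2*m/r < 1). { apply (Rmult_lt_reg_r r); try lra. field_simplify; lra. } lra. }
    apply sq_eq_pos; try lra.
    + apply Rmult_le_pos; [apply Rmult_le_pos; [lra| apply sqrt_pos]| apply sqrt_pos].
    + replace ((r * sqrt (1 - ((a - b) / (2 * m))²) * sqrt (1 - 2 * m / r)) ^ 2)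
        with (r^2 * (sqrt (1 - ((a - b) / (2 * m))²))^2 * (sqrt (1 - 2 * m / r))^2) by ring.
      rewrite !sq_sqrt' by lra. unfold r, Rsqr.
      apply (Rmult_eq_reg_r (16*m^2)); [| nra].
      transitivity (8*m^2*(a^2+b^2) - (a^2-b^2)^2 - 16*m^4); [field; lra|].
      rewrite ha, hb. ring.
  - unfold weyl_z. rewrite cos_acos by lra.
    apply (Rmult_eq_reg_r (4*m)); [| lra].
    transitivity (a^2 - b^2); [field; lra|]. rewrite ha, hb. ring.
Qed.

Definition U0f m rho z := /2 * ln ((XX m rho z - 1)/(XX m rho z + 1)).

Lemma U0_eq (m : R) (U0 : R -> R -> R) rho z : 0 < m ->
  (forall r th, 2 * m < r -> 0 <= th <= PI ->
     U0 (weyl_rho m r th) (weyl_z m r th) = / 2 * ln (1 - 2 * m / r)) ->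
  0 < rho -> U0 rho z = U0f m rho z.
Proof.
  intros hm hU hr. destruct (weyl_inv m rho z hm hr) as (h1 & h2 & h3 & h4).
  transitivity (U0 (weyl_rho m (m + (aa m rho z + bb m rho z)/2) (acos (CC m rho z)))
                  (weyl_z m (m + (aa m rho z + bb m rho z)/2) (acos (CC m rho z)))).
  { rewrite h3, h4. reflexivity. }
  rewrite hU by auto.
  unfold U0f, XX. f_equal. f_equal. field. lra.
Qed.

Lemma ext_iff (m r0 rho z : R) : 0 < m -> 2*m < r0 -> 0 < rho ->
  (exterior m r0 rho z <-> r0 < m + (aa m rho z + bb m rho z)/2).
Proof.
  intros hm hr0 hr. split.
  - intros (r & th & h1 & h2 & h3 & h4). subst rho z.
    destruct (weyl_ab m r th 0 hm) as (e1 & e2 & _); [lra|].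
    rewrite e1, e2. lra.
  - intros h. destruct (weyl_inv m rho z hm hr) as (h1 & h2 & h3 & h4).
    exists (m + (aa m rho z + bb m rho z)/2), (acos (CC m rho z)). repeat split; auto; lra.
Qed.

Definition Gf m y rho z : R :=
  if Req_dec_T y m then m * sqrt (XX m rho z ^2 - 1) / bb m rho z
  else (y * XX m rho z - m * CC m rho z - dist_y y rho z) / ((y - m) * sqrt (XX m rho z ^2 - 1)).
Definition Zf m y rho z := - ln (Gf m y rho z).

Lemma d_facts y rho z : 0 < rho -> 0 < dist_y y rho z /\ dist_y y rho z ^2 = rho^2 + (z-y)^2.
Proof.
  intros hr. unfold dist_y. pose proof (pow2_ge_0 (z-y)).
  assert (0 < rho^2) by (apply pow_lt; lra). split.
  - apply sqrt_lt_R0. lra.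
  - apply sq_sqrt'. lra.
Qed.

Lemma LN_id m y rho z : 0 < m -> 0 < rho ->
  dist_y y rho z ^2 - (y * XX m rho z - m * CC m rho z)^2 = (m^2 - y^2) * (XX m rho z ^2 - 1).
Proof.
  intros hm hr. destruct (ab_facts m rho z hm hr) as (ha0 & hb0 & ha & hb & _).
  destruct (d_facts y rho z hr) as [hd0 hd].
  unfold XX, CC. set (a := aa m rho z) in *. set (b := bb m rho z) in *.
  set (d := dist_y y rho z) in *.
  apply (Rmult_eq_reg_r (4*m^2)); [|nra].
  apply Rminus_diag_uniq.
  transitivity (((-2)*m^2 + (2)*y*m)*(a^2 - (rho^2+(z+m)^2)) + ((-2)*m^2 + (-2)*y*m)*(b^2 - (rho^2+(z-m)^2))
     + 4*m^2*(d^2 - (rho^2+(z-y)^2))).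
  - field. lra.
  - rewrite ha, hb, hd. ring.
Qed.

Lemma XC_bounds m rho z : 0 < m -> 0 < rho -> 1 < XX m rho z /\ -1 <= CC m rho z <= 1.
Proof.
  intros hm hr. destruct (ab_facts m rho z hm hr) as (ha0 & hb0 & ha & hb & hs & h1 & h2).
  unfold XX, CC. repeat split.
  - apply (Rmult_lt_reg_r (2*m)); [lra|]. field_simplify; lra.
  - apply (Rmult_le_reg_r (2*m)); [lra|]. field_simplify; lra.
  - apply (Rmult_le_reg_r (2*m)); [lra|]. field_simplify; lra.
Qed.

Lemma N_sign m y rho z : 0 < m -> 0 < rho -> y <> m ->
  0 < (y * XX m rho z - m * CC m rho z - dist_y y rho z) / (y - m).
Proof.
  intros hm hr hy. pose proof (LN_id m y rho z hm hr) as hid.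
  destruct (XC_bounds m rho z hm hr) as (hX & hC1 & hC2).
  destruct (d_facts y rho z hr) as [hd0 _].
  set (X := XX m rho z) in *. set (C := CC m rho z) in *. set (d := dist_y y rho z) in *.
  destruct (Rlt_dec m y) as [hlt|hge].
  - apply Rdiv_lt_0_compat; [|lra].
    assert (0 < y*X - m*C) by nra.
    assert (m^2 - y^2 < 0) by nra. assert (0 < X^2 - 1) by nra.
    assert ((m^2 - y^2) * (X^2-1) < 0) by (apply Rmult_neg_pos; auto).
    assert (d^2 < (y*X - m*C)^2) by lra. nra.
  - assert (y < m) by lra.
    assert (y*X - m*C - d < 0).
    { destruct (Rle_dec y (-m)).
      - assert (y*X - m*C <= 0) by nra. lra.
      - assert (0 < m^2 - y^2) by nra. assert (0 < X^2 - 1) by nra.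
        assert (0 < (m^2 - y^2) * (X^2-1)) by (apply Rmult_lt_0_compat; auto).
        assert ((y*X - m*C)^2 < d^2) by lra. nra. }
    replace ((y * X - m * C - d) / (y - m)) with ((-(y * X - m * C - d)) / (-(y - m))) by (field; lra).
    apply Rdiv_lt_0_compat; lra.
Qed.

Lemma Gf_pos m y rho z : 0 < m -> 0 < rho -> 0 < Gf m y rho z.
Proof.
  intros hm hr. destruct (XC_bounds m rho z hm hr) as (hX & _).
  destruct (ab_facts m rho z hm hr) as (ha0 & hb0 & _).
  assert (hs : 0 < sqrt (XX m rho z ^ 2 - 1)) by (apply sqrt_lt_R0; nra).
  unfold Gf. destruct (Req_dec_T y m) as [e|ne].
  - apply Rdiv_lt_0_compat; [apply Rmult_lt_0_compat|]; lra.
  - pose proof (N_sign m y rho z hm hr ne).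
    replace ((y * XX m rho z - m * CC m rho z - dist_y y rho z) / ((y - m) * sqrt (XX m rho z ^ 2 - 1)))
      with ((y * XX m rho z - m * CC m rho z - dist_y y rho z) / (y - m) / sqrt (XX m rho z ^ 2 - 1))
      by (field; split; lra).
    apply Rdiv_lt_0_compat; lra.
Qed.

Definition Uder m a b a' b' := ((a'+b')/(2*m)) / (((a+b)/(2*m))^2 - 1).
Definition Zder m y a b d a' b' d' :=
  - (y*((a'+b')/(2*m)) - m*((a'-b')/(2*m)) - d') / (y*((a+b)/(2*m)) - m*((a-b)/(2*m)) - d)
  + ((a+b)/(2*m))*((a'+b')/(2*m)) / (((a+b)/(2*m))^2-1).
Definition Zderm m a b a' b' :=
  - ((a+b)/(2*m))*((a'+b')/(2*m)) / (((a+b)/(2*m))^2-1) + b'/b.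

Lemma alg1 (rho z y m a b d : R) (ha : a^2 = rho^2 + (z+m)^2) (hb : b^2 = rho^2 + (z-m)^2) (hd : d^2 = rho^2 + (z-y)^2)
  (hm : 0 < m) (ha0 : 0 < a) (hb0 : 0 < b) (hd0 : 0 < d)
  (hS : (a+b)^2 - 4*m^2 <> 0) : (y-m)*a + (y+m)*b - 2*m*d <> 0 ->
  Zder m y a b d (rho/a) (rho/b) (rho/d) =
  (z-y)/d * Uder m a b (rho/a) (rho/b) + rho/d * Uder m a b ((z+m)/a) ((z-m)/b).
Proof.
  set (XR := rho*(a+b)). set (XZ := (z+m)*b + (z-m)*a). set (S := (a+b)^2 - 4*m^2).
  intros hP. set (P := (y-m)*a + (y+m)*b - 2*m*d) in *.
  set (NR := rho*((y-m)*b*d + (y+m)*a*d - 2*m*a*b)).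
  assert (hf : -NR*S + (a+b)*XR*P*d - 2*m*((z-y)*XR + rho*XZ)*P = 0).
  { transitivity (((-2)*rho*m*d^2 + (-2)*rho*m*b*d + (4)*rho*m*b^2 + (-2)*rho*m*a*d + (2)*rho*m*a*b + (-2)*rho*m^3 + (2)*rho*y^2*m + (4)*rho*z*m^2 + (-4)*rho*z*y*m) * (a^2 - (rho^2+(z+m)^2))
     + ((-2)*rho*m*d^2 + (2)*rho*m*b*d + (2)*rho*m*a*d + (2)*rho*m*a*b + (2)*rho*m^3 + (2)*rho*y^2*m + (4)*rho*z*m^2 + (-4)*rho*z*y*m + (4)*rho*z^2*m + (4)*rho^3*m) * (b^2 - (rho^2+(z-m)^2))
     + ((-4)*rho*m*a*b + (-4)*rho*m^3 + (-4)*rho*z^2*m + (-4)*rho^3*m) * (d^2 - (rho^2+(z-y)^2))).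
    - unfold NR, S, XR, XZ, P. ring.
    - rewrite ha, hb, hd. ring. }
  apply Rminus_diag_uniq.
  transitivity ((-NR*S + (a+b)*XR*P*d - 2*m*((z-y)*XR + rho*XZ)*P) / (a*b*d*P*S)).
  - unfold Zder, Uder, NR, S, XR, XZ, P in *. field. repeat split; try lra.
  - rewrite hf. unfold Rdiv. ring.
Qed.

Lemma alg2 (rho z y m a b d : R) (ha : a^2 = rho^2 + (z+m)^2) (hb : b^2 = rho^2 + (z-m)^2) (hd : d^2 = rho^2 + (z-y)^2)
  (hm : 0 < m) (ha0 : 0 < a) (hb0 : 0 < b) (hd0 : 0 < d)
  (hS : (a+b)^2 - 4*m^2 <> 0) : (y-m)*a + (y+m)*b - 2*m*d <> 0 ->
  Zder m y a b d ((z+m)/a) ((z-m)/b) ((z-y)/d) =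
  (z-y)/d * Uder m a b ((z+m)/a) ((z-m)/b) + rho/d * (- Uder m a b (rho/a) (rho/b)).
Proof.
  set (XR := rho*(a+b)). set (XZ := (z+m)*b + (z-m)*a). set (S := (a+b)^2 - 4*m^2).
  intros hP. set (P := (y-m)*a + (y+m)*b - 2*m*d) in *.
  set (NZ := (y-m)*(z+m)*b*d + (y+m)*(z-m)*a*d - 2*m*(z-y)*a*b).
  assert (hf : -NZ*S + (a+b)*XZ*P*d - 2*m*((z-y)*XZ - rho*XR)*P = 0).
  { transitivity (((2)*m^2*d^2 + (2)*m^2*b*d + (2)*m^2*a*d + (-4)*y*m*b^2 + (-2)*y*m*a*b + (2)*y*m^3 + (-2)*y^2*m^2 + (-2)*z*m*d^2 + (-2)*z*m*b*d + (4)*z*m*b^2 + (-2)*z*m*a*d + (2)*z*m*a*b + (-2)*z*m^3 + (2)*z*y^2*m + (2)*z^2*m^2 + (-2)*z^2*y*m + (-2)*rho^2*m^2 + (2)*rho^2*y*m) * (a^2 - (rho^2+(z+m)^2))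
     + ((-2)*m^2*d^2 + (2)*m^2*b*d + (2)*m^2*a*d + (-2)*y*m*a*b + (-2)*y*m^3 + (2)*y^2*m^2 + (-2)*z*m*d^2 + (2)*z*m*b*d + (2)*z*m*a*d + (2)*z*m*a*b + (2)*z*m^3 + (-8)*z*y*m^2 + (2)*z*y^2*m + (6)*z^2*m^2 + (-6)*z^2*y*m + (4)*z^3*m + (2)*rho^2*m^2 + (-2)*rho^2*y*m + (4)*rho^2*z*m) * (b^2 - (rho^2+(z-m)^2))
     + ((-4)*z*m*a*b + (4)*z*m^3 + (-4)*z^3*m + (-4)*rho^2*z*m) * (d^2 - (rho^2+(z-y)^2))).
    - unfold NZ, S, XR, XZ, P. ring.
    - rewrite ha, hb, hd. ring. }
  apply Rminus_diag_uniq.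
  transitivity ((-NZ*S + (a+b)*XZ*P*d - 2*m*((z-y)*XZ - rho*XR)*P) / (a*b*d*P*S)).
  - unfold Zder, Uder, NZ, S, XR, XZ, P in *. field. repeat split; try lra.
  - rewrite hf. unfold Rdiv. ring.
Qed.

Lemma alg3 (rho z m a b : R) (ha : a^2 = rho^2 + (z+m)^2) (hb : b^2 = rho^2 + (z-m)^2)
  (hm : 0 < m) (ha0 : 0 < a) (hb0 : 0 < b)
  (hS : (a+b)^2 - 4*m^2 <> 0) :
  Zderm m a b (rho/a) (rho/b) =
  (z-m)/b * Uder m a b (rho/a) (rho/b) + rho/b * Uder m a b ((z+m)/a) ((z-m)/b).
Proof.
  set (XR := rho*(a+b)). set (XZ := (z+m)*b + (z-m)*a). set (S := (a+b)^2 - 4*m^2).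
  assert (hf : -(a+b)*XR*b + rho*a*S - 2*m*((z-m)*XR + rho*XZ) = 0).
  { transitivity (((1)*rho*b + (1)*rho*a) * (a^2 - (rho^2+(z+m)^2))
     + ((-1)*rho*b + (-1)*rho*a) * (b^2 - (rho^2+(z-m)^2))).
    - unfold S, XR, XZ. ring.
    - rewrite ha, hb. ring. }
  apply Rminus_diag_uniq.
  transitivity ((-(a+b)*XR*b + rho*a*S - 2*m*((z-m)*XR + rho*XZ)) / (a*b^2*S)).
  - unfold Zderm, Uder, S, XR, XZ in *. field. repeat split; try lra.
  - rewrite hf. unfold Rdiv. ring.
Qed.

Lemma alg4 (rho z m a b : R) (ha : a^2 = rho^2 + (z+m)^2) (hb : b^2 = rho^2 + (z-m)^2)
  (hm : 0 < m) (ha0 : 0 < a) (hb0 : 0 < b)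
  (hS : (a+b)^2 - 4*m^2 <> 0) :
  Zderm m a b ((z+m)/a) ((z-m)/b) =
  (z-m)/b * Uder m a b ((z+m)/a) ((z-m)/b) + rho/b * (- Uder m a b (rho/a) (rho/b)).
Proof.
  set (XR := rho*(a+b)). set (XZ := (z+m)*b + (z-m)*a). set (S := (a+b)^2 - 4*m^2).
  assert (hf : -(a+b)*XZ*b + (z-m)*a*S - 2*m*((z-m)*XZ - rho*XR) = 0).
  { transitivity (((-1)*m*b + (-1)*m*a + (1)*z*b + (1)*z*a) * (a^2 - (rho^2+(z+m)^2))
     + ((-1)*m*b + (-1)*m*a + (-1)*z*b + (-1)*z*a) * (b^2 - (rho^2+(z-m)^2))).
    - unfold S, XR, XZ. ring.
    - rewrite ha, hb. ring. }
  apply Rminus_diag_uniq.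
  transitivity ((-(a+b)*XZ*b + (z-m)*a*S - 2*m*((z-m)*XZ - rho*XR)) / (a*b^2*S)).
  - unfold Zderm, Uder, S, XR, XZ in *. field. repeat split; try lra.
  - rewrite hf. unfold Rdiv. ring.
Qed.


Lemma deriv_Z (A B Dd : R -> R) m y x a' b' d' :
  0 < m -> y <> m -> is_derive A x a' -> is_derive B x b' -> is_derive Dd x d' ->
  0 < (y * ((A x + B x)/(2*m)) - m*((A x - B x)/(2*m)) - Dd x)/(y-m) ->
  0 < ((A x + B x)/(2*m))^2 - 1 ->
  is_derive (fun s => - ln ((y * ((A s + B s)/(2*m)) - m*((A s - B s)/(2*m)) - Dd s)/(y-m))
                      + /2 * ln (((A s + B s)/(2*m))^2 - 1)) x (Zder m y (A x) (B x) (Dd x) a' b' d').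
Proof.
  intros hm hy hA hB hD hN hX.
  auto_derive.
  - repeat split; try (eexists; eassumption); auto.
    + replace ((y * ((A x + B x) * / (2 * m)) + - (m * ((A x + - B x) * / (2 * m))) + - Dd x) * / (y - m))
       with ((y * ((A x + B x)/(2*m)) - m*((A x - B x)/(2*m)) - Dd x)/(y-m)) by (unfold Rdiv, Rminus; ring). auto.
    + replace ((A x + B x) * / (2 * m) * ((A x + B x) * / (2 * m) * 1) + - (1))
       with (((A x + B x)/(2*m))^2 - 1) by (unfold Rdiv, Rminus; ring). auto.
  - assert (eA : Derive (fun t => A t) x = a') by (apply is_derive_unique; exact hA).
    assert (eB : Derive (fun t => B t) x = b') by (apply is_derive_unique; exact hB).
    assert (eD : Derive (fun t => Dd t) x = d') by (apply is_derive_unique; exact hD).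
    rewrite eA, eB, eD.
    unfold Zder.
    assert ((y * ((A x + B x)/(2*m)) - m*((A x - B x)/(2*m)) - Dd x) <> 0).
    { intro e. rewrite e in hN. unfold Rdiv in hN. rewrite Rmult_0_l in hN. lra. }
    assert ((A x + B x) ^ 2 - 4 * m ^ 2 <> 0).
    { intro e. assert (e2 : ((A x + B x) / (2 * m)) ^ 2 - 1 = ((A x + B x) ^ 2 - 4 * m ^ 2)/(4*m^2)) by (field; lra).
      rewrite e in e2. rewrite e2 in hX. unfold Rdiv in hX. rewrite Rmult_0_l in hX. lra. }
    assert (y * (A x + B x) - (A x - B x) * m - Dd x * (m * 2) <> 0).
    { intro e. apply H. apply (Rmult_eq_reg_r (2*m)); [|lra]. rewrite Rmult_0_l. rewrite <- e. field. lra. }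
    field. repeat split; try lra.
Qed.

Lemma deriv_U (A B : R -> R) m x a' b' :
  0 < m -> is_derive A x a' -> is_derive B x b' ->
  1 < (A x + B x)/(2*m) ->
  is_derive (fun s => /2 * ln (((A s + B s)/(2*m) - 1)/((A s + B s)/(2*m) + 1))) x (Uder m (A x) (B x) a' b').
Proof.
  intros hm hA hB hX.
  assert (eA : Derive (fun t => A t) x = a') by (apply is_derive_unique; exact hA).
  assert (eB : Derive (fun t => B t) x = b') by (apply is_derive_unique; exact hB).
  assert (hS : (A x + B x) ^ 2 - 4 * m ^ 2 <> 0).
  { assert (e2 : ((A x + B x) / (2 * m)) ^ 2 - 1 = ((A x + B x) ^ 2 - 4 * m ^ 2)/(4*m^2)) by (field; lra).
    intro e. rewrite e in e2. unfold Rdiv in e2. rewrite Rmult_0_l in e2. nra. }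
  assert (h1 : A x + B x - 2*m <> 0).
  { intro e. assert (A x + B x = 2*m) by lra. rewrite H in hX.
    replace (2*m/(2*m)) with 1 in hX by (field; lra). lra. }
  assert (h2 : A x + B x + 2*m <> 0).
  { intro e. assert (A x + B x = -(2*m)) by lra. rewrite H in hX.
    replace (-(2*m)/(2*m)) with (-1) in hX by (field; lra). lra. }
  set (X := (A x + B x)/(2*m)) in *.
  auto_derive; change ((A x + B x) * / (2 * m)) with X.
  { repeat split; try (eexists; eassumption); try lra.
    apply Rdiv_lt_0_compat; lra. }
  rewrite eA, eB. unfold Uder. fold X.
  unfold X. field. repeat split; try lra.
Qed.

Lemma deriv_Zm (A B : R -> R) m x a' b' :
  0 < m -> is_derive A x a' -> is_derive B x b' -> 0 < B x ->
  1 < (A x + B x)/(2*m) ->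
  is_derive (fun s => - ln m - /2 * ln (((A s + B s)/(2*m))^2 - 1) + ln (B s)) x (Zderm m (A x) (B x) a' b').
Proof.
  intros hm hA hB hB0 hX.
  assert (eA : Derive (fun t => A t) x = a') by (apply is_derive_unique; exact hA).
  assert (eB : Derive (fun t => B t) x = b') by (apply is_derive_unique; exact hB).
  assert (hX2 : 0 < ((A x + B x)/(2*m))^2 - 1) by nra.
  auto_derive.
  - repeat split; try (eexists; eassumption); auto.
    replace ((A x + B x) * / (2 * m) * ((A x + B x) * / (2 * m) * 1) + - (1))
       with (((A x + B x)/(2*m))^2 - 1) by (unfold Rdiv, Rminus; ring). auto.
  - rewrite eA, eB. unfold Zderm.
    assert ((A x + B x) ^ 2 - 4 * m ^ 2 <> 0).
    { intro e. assert (e2 : ((A x + B x) / (2 * m)) ^ 2 - 1 = ((A x + B x) ^ 2 - 4 * m ^ 2)/(4*m^2)) by (field; lra).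
      rewrite e in e2. rewrite e2 in hX2. unfold Rdiv in hX2. rewrite Rmult_0_l in hX2. lra. }
    field. repeat split; try lra.
Qed.

Lemma der_sqrt_r (c rho : R) : 0 < rho -> 0 <= c ->
  is_derive (fun s => sqrt (s^2 + c)) rho (rho / sqrt (rho^2 + c)).
Proof.
  intros hr hc. assert (h : 0 < rho^2 + c) by (assert (0 < rho^2) by (apply pow_lt; lra); lra).
  auto_derive.
  - replace (rho * (rho * 1) + c) with (rho^2 + c) by ring. auto.
  - replace (rho * (rho * 1) + c) with (rho^2 + c) by ring.
    assert (0 < sqrt (rho^2 + c)) by (apply sqrt_lt_R0; auto). field. lra.
Qed.

Lemma der_sqrt_zp (rho k z : R) : 0 < rho ->
  is_derive (fun t => sqrt (rho^2 + (t + k)^2)) z ((z + k) / sqrt (rho^2 + (z + k)^2)).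
Proof.
  intros hr. assert (h : 0 < rho^2 + (z+k)^2) by (assert (0 < rho^2) by (apply pow_lt; lra); pose proof (pow2_ge_0 (z+k)); lra).
  auto_derive.
  - replace (rho * (rho * 1) + (z + k) * ((z + k) * 1)) with (rho^2 + (z+k)^2) by ring. auto.
  - replace (rho * (rho * 1) + (z + k) * ((z + k) * 1)) with (rho^2 + (z+k)^2) by ring.
    assert (0 < sqrt (rho^2 + (z+k)^2)) by (apply sqrt_lt_R0; auto). field. lra.
Qed.

Lemma der_sqrt_zm (rho k z : R) : 0 < rho ->
  is_derive (fun t => sqrt (rho^2 + (t - k)^2)) z ((z - k) / sqrt (rho^2 + (z - k)^2)).
Proof.
  intros hr. assert (h : 0 < rho^2 + (z-k)^2) by (assert (0 < rho^2) by (apply pow_lt; lra); pose proof (pow2_ge_0 (z-k)); lra).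
  auto_derive.
  - replace (rho * (rho * 1) + (z + - k) * ((z + - k) * 1)) with (rho^2 + (z-k)^2) by ring. auto.
  - replace (rho * (rho * 1) + (z + - k) * ((z + - k) * 1)) with (rho^2 + (z-k)^2) by ring.
    assert (0 < sqrt (rho^2 + (z-k)^2)) by (apply sqrt_lt_R0; auto). field. lra.
Qed.



Lemma ln_sqrt' (u : R) : 0 < u -> ln (sqrt u) = /2 * ln u.
Proof.
  intros hu. assert (hs : 0 < sqrt u) by (apply sqrt_lt_R0; auto).
  assert (e : ln (sqrt u ^ 2) = INR 2 * ln (sqrt u)) by (apply ln_pow; auto).
  rewrite sq_sqrt' in e by lra. simpl INR in e. rewrite e. field.
Qed.

Lemma Zf_split_ne m y s z : 0 < m -> 0 < s -> y <> m ->
  Zf m y s z = - ln ((y * ((aa m s z + bb m s z)/(2*m)) - m*((aa m s z - bb m s z)/(2*m)) - dist_y y s z)/(y-m))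
               + /2 * ln (((aa m s z + bb m s z)/(2*m))^2 - 1).
Proof.
  intros hm hs hy. pose proof (N_sign m y s z hm hs hy) as hN.
  destruct (XC_bounds m s z hm hs) as (hX & _).
  assert (hX2 : 0 < XX m s z ^2 - 1) by nra.
  assert (hq : 0 < sqrt (XX m s z ^ 2 - 1)) by (apply sqrt_lt_R0; auto).
  unfold Zf, Gf. destruct (Req_dec_T y m) as [e|_]; [congruence|].
  unfold XX, CC in *.
  set (p := (y * ((aa m s z + bb m s z)/(2*m)) - m*((aa m s z - bb m s z)/(2*m)) - dist_y y s z)) in *.
  set (u := ((aa m s z + bb m s z) / (2 * m)) ^ 2 - 1) in *.
  replace (p / ((y - m) * sqrt u)) with (p/(y-m) * / sqrt u) by (field; split; lra).
  rewrite ln_mult, ln_Rinv, ln_sqrt'; auto. 2: apply Rinv_0_lt_compat; auto. ring.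
Qed.

Lemma Zf_split_m m s z : 0 < m -> 0 < s ->
  Zf m m s z = - ln m - /2 * ln (((aa m s z + bb m s z)/(2*m))^2 - 1) + ln (bb m s z).
Proof.
  intros hm hs. destruct (ab_facts m s z hm hs) as (ha0 & hb0 & _).
  destruct (XC_bounds m s z hm hs) as (hX & _).
  assert (hX2 : 0 < XX m s z ^2 - 1) by nra.
  assert (hq : 0 < sqrt (XX m s z ^ 2 - 1)) by (apply sqrt_lt_R0; auto).
  unfold Zf, Gf. destruct (Req_dec_T m m) as [_|n]; [|congruence].
  unfold XX in *.
  set (u := ((aa m s z + bb m s z) / (2 * m)) ^ 2 - 1) in *.
  unfold Rdiv at 1. rewrite ln_mult, ln_mult, ln_Rinv, ln_sqrt'; [ring| ..].
  all: try apply Rinv_0_lt_compat; try apply Rmult_lt_0_compat; auto.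
Qed.

Lemma der_aa_r m rho z : 0 < rho -> is_derive (fun s => aa m s z) rho (rho / aa m rho z).
Proof. intros; unfold aa; apply der_sqrt_r; auto; apply pow2_ge_0. Qed.
Lemma der_bb_r m rho z : 0 < rho -> is_derive (fun s => bb m s z) rho (rho / bb m rho z).
Proof. intros; unfold bb; apply der_sqrt_r; auto; apply pow2_ge_0. Qed.
Lemma der_dd_r y rho z : 0 < rho -> is_derive (fun s => dist_y y s z) rho (rho / dist_y y rho z).
Proof. intros; unfold dist_y; apply der_sqrt_r; auto; apply pow2_ge_0. Qed.
Lemma der_aa_z m rho z : 0 < rho -> is_derive (fun t => aa m rho t) z ((z+m) / aa m rho z).
Proof. intros; unfold aa; apply der_sqrt_zp; auto. Qed.
Lemma der_bb_z m rho z : 0 < rho -> is_derive (fun t => bb m rho t) z ((z-m) / bb m rho z).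
Proof. intros; unfold bb; apply der_sqrt_zm; auto. Qed.
Lemma der_dd_z y rho z : 0 < rho -> is_derive (fun t => dist_y y rho t) z ((z-y) / dist_y y rho z).
Proof. intros; unfold dist_y; apply der_sqrt_zm; auto. Qed.

Lemma U0f_der_r m rho z : 0 < m -> 0 < rho ->
  is_derive (fun s => U0f m s z) rho
    (Uder m (aa m rho z) (bb m rho z) (rho / aa m rho z) (rho / bb m rho z)).
Proof.
  intros hm hr. destruct (XC_bounds m rho z hm hr) as (hX & _).
  exact (deriv_U (fun s => aa m s z) (fun s => bb m s z) m rho _ _ hm (der_aa_r m rho z hr) (der_bb_r m rho z hr) hX).
Qed.

Lemma U0f_der_z m rho z : 0 < m -> 0 < rho ->
  is_derive (fun t => U0f m rho t) z
    (Uder m (aa m rho z) (bb m rho z) ((z+m) / aa m rho z) ((z-m) / bb m rho z)).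
Proof.
  intros hm hr. destruct (XC_bounds m rho z hm hr) as (hX & _).
  exact (deriv_U (fun t => aa m rho t) (fun t => bb m rho t) m z _ _ hm (der_aa_z m rho z hr) (der_bb_z m rho z hr) hX).
Qed.

Lemma loc_pos rho : 0 < rho -> locally rho (fun s => 0 < s).
Proof. intros h. apply (open_gt 0). exact h. Qed.

Lemma Zf_der m y rho z : 0 < m -> 0 < rho ->
  is_derive (fun s => Zf m y s z) rho
    ((z-y)/dist_y y rho z * Uder m (aa m rho z) (bb m rho z) (rho / aa m rho z) (rho / bb m rho z)
     + rho/dist_y y rho z * Uder m (aa m rho z) (bb m rho z) ((z+m) / aa m rho z) ((z-m) / bb m rho z)) /\
  is_derive (fun t => Zf m y rho t) z
    ((z-y)/dist_y y rho z * Uder m (aa m rho z) (bb m rho z) ((z+m) / aa m rho z) ((z-m) / bb m rho z)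
     + rho/dist_y y rho z * (- Uder m (aa m rho z) (bb m rho z) (rho / aa m rho z) (rho / bb m rho z))).
Proof.
  intros hm hr.
  destruct (ab_facts m rho z hm hr) as (ha0 & hb0 & ha & hb & hs & _).
  destruct (d_facts y rho z hr) as [hd0 hd].
  destruct (XC_bounds m rho z hm hr) as (hX & _).
  assert (hS : (aa m rho z + bb m rho z)^2 - 4*m^2 <> 0) by nra.
  destruct (Req_dec_T y m) as [e|ne].
  - subst y. change (dist_y m rho z) with (bb m rho z). split.
    + rewrite <- (alg3 rho z m _ _ ha hb hm ha0 hb0 hS).
      apply is_derive_ext_loc with
        (f := fun s => - ln m - /2 * ln ((((fun s => aa m s z) s + (fun s => bb m s z) s)/(2*m))^2 - 1) + ln ((fun s => bb m s z) s)).
      { apply (filter_imp (fun s => 0 < s)); [|apply loc_pos; auto].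
        intros s hs0. cbv beta. symmetry. apply Zf_split_m; auto. }
      apply (deriv_Zm (fun s => aa m s z) (fun s => bb m s z)); auto. apply der_aa_r; auto. apply der_bb_r; auto.
    + rewrite <- (alg4 rho z m _ _ ha hb hm ha0 hb0 hS).
      apply is_derive_ext with
        (f := fun t => - ln m - /2 * ln ((((fun t => aa m rho t) t + (fun t => bb m rho t) t)/(2*m))^2 - 1) + ln ((fun t => bb m rho t) t)).
      { intros t. cbv beta. symmetry. apply Zf_split_m; auto. }
      apply (deriv_Zm (fun t => aa m rho t) (fun t => bb m rho t)); auto. apply der_aa_z; auto. apply der_bb_z; auto.
  - pose proof (N_sign m y rho z hm hr ne) as hN.
    assert (hP : (y-m)*aa m rho z + (y+m)*bb m rho z - 2*m*dist_y y rho z <> 0).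
    { intro e. unfold XX, CC in hN.
      replace (y * ((aa m rho z + bb m rho z) / (2 * m)) - m * ((aa m rho z - bb m rho z) / (2 * m)) - dist_y y rho z)
        with (((y-m)*aa m rho z + (y+m)*bb m rho z - 2*m*dist_y y rho z)/(2*m)) in hN by (field; lra).
      rewrite e in hN. unfold Rdiv in hN. rewrite !Rmult_0_l in hN. lra. }
    unfold XX, CC in hN. split.
    + rewrite <- (alg1 rho z y m _ _ _ ha hb hd hm ha0 hb0 hd0 hS hP).
      apply is_derive_ext_loc with
        (f := fun s => - ln ((y * (((fun s => aa m s z) s + (fun s => bb m s z) s)/(2*m)) - m*(((fun s => aa m s z) s - (fun s => bb m s z) s)/(2*m)) - (fun s => dist_y y s z) s)/(y-m))
               + /2 * ln ((((fun s => aa m s z) s + (fun s => bb m s z) s)/(2*m))^2 - 1)).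
      { apply (filter_imp (fun s => 0 < s)); [|apply loc_pos; auto].
        intros s hs0. cbv beta. symmetry. apply Zf_split_ne; auto. }
      apply (deriv_Z (fun s => aa m s z) (fun s => bb m s z) (fun s => dist_y y s z)); auto. apply der_aa_r; auto. apply der_bb_r; auto. apply der_dd_r; auto.
      unfold XX in hX. nra.
    + rewrite <- (alg2 rho z y m _ _ _ ha hb hd hm ha0 hb0 hd0 hS hP).
      apply is_derive_ext with
        (f := fun t => - ln ((y * (((fun t => aa m rho t) t + (fun t => bb m rho t) t)/(2*m)) - m*(((fun t => aa m rho t) t - (fun t => bb m rho t) t)/(2*m)) - (fun t => dist_y y rho t) t)/(y-m))
               + /2 * ln ((((fun t => aa m rho t) t + (fun t => bb m rho t) t)/(2*m))^2 - 1)).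
      { intros t. cbv beta. symmetry. apply Zf_split_ne; auto. }
      apply (deriv_Z (fun t => aa m rho t) (fun t => bb m rho t) (fun t => dist_y y rho t)); auto. apply der_aa_z; auto. apply der_bb_z; auto. apply der_dd_z; auto.
      unfold XX in hX. nra.
Qed.


Lemma sqrt_x2m1 x : 1 < x -> x - 1 <= sqrt (x^2 - 1) <= x /\ sqrt (x^2-1) ^2 = x^2 - 1.
Proof.
  intros hx. assert (h : sqrt (x^2-1)^2 = x^2-1) by (apply sq_sqrt'; nra).
  pose proof (sqrt_pos (x^2-1)). repeat split; auto; nra.
Qed.

Lemma mxD_bound m y x c D : 0 < m -> 1 < x -> -1 <= c <= 1 -> 0 <= D ->
  D^2 = m^2*x^2 + y^2 - 2*m*x*y*c - m^2*(1-c^2) ->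
  Rabs (m*x - D) <= 2 * Rabs y + m + y^2/m.
Proof.
  intros hm hx hc hD hD2.
  set (ay := Rabs y). assert (hay : -ay <= y <= ay) by (unfold ay; destruct (Rcase_abs y); [rewrite Rabs_left|rewrite Rabs_right]; try split; lra).
  pose proof (Rabs_pos y) as hay0. fold ay in hay0.
  assert (hyc : -ay <= y*c <= ay).
  { destruct (Rle_dec 0 y).
    - unfold ay; rewrite Rabs_right by lra. split; nra.
    - unfold ay; rewrite Rabs_left by lra. split; nra. }
  assert (hmx : 0 < m*x) by nra.
  assert (E : (m*x-D)*(m*x+D) = - y^2 + 2*m*x*(y*c) + m^2*(1-c^2)).
  { replace ((m*x-D)*(m*x+D)) with (m^2*x^2 - D^2) by ring. rewrite hD2. ring. }
  assert (hc2 : 0 <= m^2*(1-c^2)) by (apply Rmult_le_pos; nra).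
  assert (hc3 : m^2*(1-c^2) <= m^2) by nra.
  assert (hyc2 : 2*m*x*(y*c) <= 2*m*x*ay) by (apply Rmult_le_compat_l; lra).
  assert (hyc3 : -(2*m*x*ay) <= 2*m*x*(y*c)).
  { replace (-(2*m*x*ay)) with (2*m*x*(-ay)) by ring. apply Rmult_le_compat_l; lra. }
  assert (hy2 : 0 <= y^2) by apply pow2_ge_0.
  assert (h1 : m*x - D <= 2*ay + m).
  { destruct (Rle_dec (m*x) D); [nra|].
    assert ((m*x - D)*(m*x) <= (m*x-D)*(m*x+D)) by nra.
    assert ((m*x-D)*(m*x+D) <= 2*m*x*ay + m^2) by lra.
    assert ((m*x - D)*(m*x) <= (2*ay + m)*(m*x)) by nra. nra. }
  assert (h2 : D - m*x <= 2*ay + y^2/m).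
  { destruct (Rle_dec D (m*x)); [assert (0 <= y^2/m) by (apply Rmult_le_pos; [nra| left; apply Rinv_0_lt_compat; lra]); nra|].
    assert ((D - m*x)*(m*x) <= (D - m*x)*(D+m*x)) by nra.
    assert ((D-m*x)*(D+m*x) <= y^2 + 2*m*x*ay).
    { replace ((D-m*x)*(D+m*x)) with (-((m*x-D)*(m*x+D))) by ring. lra. }
    assert (y^2/m * (m*x) >= y^2) by (unfold Rdiv; replace (y^2 * /m * (m*x)) with (y^2 * x) by (field; lra); nra).
    assert ((D - m*x)*(m*x) <= (2*ay + y^2/m)*(m*x)) by nra. nra. }
  assert (0 <= y^2/m) by (apply Rmult_le_pos; [nra| left; apply Rinv_0_lt_compat; lra]).
  apply Rabs_le; split; lra.
Qed.

Lemma div_lt_helper (E Q δ : R) : Q <> 0 -> Rabs E < δ * Rabs Q -> Rabs (E / Q) < δ.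
Proof.
  intros hQ h. assert (0 < Rabs Q) by (apply Rabs_pos_lt; auto).
  unfold Rdiv. rewrite Rabs_mult, Rabs_Rinv by lra.
  apply (Rmult_lt_reg_r (Rabs Q)); auto. rewrite Rmult_assoc, Rinv_l by lra. lra.
Qed.

Lemma abs3 (u v w : R) : Rabs (u + v - w) <= Rabs u + Rabs v + Rabs w.
Proof.
  unfold Rminus. eapply Rle_trans; [apply Rabs_triang|]. rewrite Rabs_Ropp.
  pose proof (Rabs_triang u v). lra.
Qed.

Lemma g_est_ne m y x c D δ : 0 < m -> y <> m -> 1 < x -> -1 <= c <= 1 -> 0 <= D ->
  D^2 = m^2*x^2 + y^2 - 2*m*x*y*c - m^2*(1-c^2) -> 0 < δ ->
  Rabs (y-m) + (2*Rabs y + m + y^2/m) + m < δ * Rabs (y-m) * (x-1) ->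
  Rabs ((y*x - m*c - D)/((y-m)*sqrt(x^2-1)) - 1) < δ.
Proof.
  intros hm hy hx hc hD hD2 hδ hK.
  destruct (sqrt_x2m1 x hx) as ((hs1 & hs2) & hs3).
  set (s := sqrt (x^2-1)) in *.
  pose proof (mxD_bound m y x c D hm hx hc hD hD2) as hb.
  assert (hym : 0 < Rabs (y-m)) by (apply Rabs_pos_lt; lra).
  replace ((y*x - m*c - D)/((y-m)*s) - 1) with
    (((y-m)*(x-s) + (m*x - D) - m*c) / ((y-m)*s)) by (field; split; lra).
  apply div_lt_helper. { apply Rmult_integral_contrapositive_currified; lra. }
  assert (hQ : Rabs (y-m) * (x-1) <= Rabs ((y-m)*s)).
  { rewrite Rabs_mult, (Rabs_right s) by lra. apply Rmult_le_compat_l; lra. }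
  assert (h1 : Rabs ((y-m)*(x-s)) <= Rabs (y-m)).
  { rewrite Rabs_mult. rewrite (Rabs_right (x-s)) by lra.
    replace (Rabs (y-m)) with (Rabs (y-m) * 1) at 2 by ring. apply Rmult_le_compat_l; lra. }
  assert (h2 : Rabs (m*c) <= m).
  { rewrite Rabs_mult, (Rabs_right m) by lra.
    replace m with (m*1) at 2 by ring. apply Rmult_le_compat_l; [lra|]. apply Rabs_le; lra. }
  pose proof (abs3 ((y-m)*(x-s)) (m*x - D) (m*c)).
  assert (δ * Rabs (y-m) * (x-1) <= δ * Rabs ((y-m)*s)).
  { rewrite Rmult_assoc. apply Rmult_le_compat_l; lra. }
  lra.
Qed.

Lemma g_est_m m x c δ : 0 < m -> 1 < x -> -1 <= c <= 1 -> 0 < δ -> 2 < δ * (x-1) ->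
  Rabs (m * sqrt (x^2-1) / (m*(x - c)) - 1) < δ.
Proof.
  intros hm hx hc hδ hK.
  destruct (sqrt_x2m1 x hx) as ((hs1 & hs2) & hs3).
  set (s := sqrt (x^2-1)) in *.
  replace (m * s / (m*(x-c)) - 1) with ((s - x + c)/(x - c)) by (field; split; lra).
  apply div_lt_helper; [lra|].
  rewrite (Rabs_right (x-c)) by lra.
  assert (Rabs (s - x + c) <= 2) by (apply Rabs_le; split; lra).
  nra.
Qed.

Lemma delta_pos eps : 0 < eps -> 0 < 1 - exp (- eps).
Proof. intros h. assert (exp (-eps) < exp 0) by (apply exp_increasing; lra). rewrite exp_0 in H. lra. Qed.

Lemma ln_small g eps : 0 < eps -> Rabs (g - 1) < 1 - exp (- eps) -> Rabs (- ln g) < eps.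
Proof.
  intros he h. apply Rabs_def2 in h. destruct h as [h1 h2].
  assert (hu : exp eps * exp (-eps) = 1) by (rewrite <- exp_plus; replace (eps + - eps) with 0 by ring; apply exp_0).
  pose proof (exp_pos eps). pose proof (exp_pos (-eps)).
  assert (hg : exp (-eps) < g) by lra.
  assert (hg2 : g < exp eps) by nra.
  assert (l1 : ln (exp (-eps)) < ln g) by (apply ln_increasing; auto).
  assert (l2 : ln g < ln (exp eps)) by (apply ln_increasing; lra).
  rewrite ln_exp in l1, l2. rewrite Rabs_Ropp. apply Rabs_def1; lra.
Qed.

Lemma XC_weyl m r th : 0 < m -> 2*m < r ->
  XX m (weyl_rho m r th) (weyl_z m r th) = r/m - 1 /\
  CC m (weyl_rho m r th) (weyl_z m r th) = cos th /\
  bb m (weyl_rho m r th) (weyl_z m r th) = m * (r/m - 1 - cos th).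
Proof.
  intros hm hr. destruct (weyl_ab m r th 0 hm hr) as (e1 & e2 & _).
  unfold XX, CC. rewrite e1, e2. repeat split; field; lra.
Qed.

Lemma Dxy_sq m y x th : 1 < x -> 0 < m ->
  Dxy m y x th ^2 = m^2*x^2 + y^2 - 2*m*x*y*cos th - m^2*(1 - cos th ^2) /\ 0 <= Dxy m y x th.
Proof.
  intros hx hm. pose proof (sin2_cos2 th) as hsc. unfold Rsqr in hsc.
  assert (e : sin th ^2 = 1 - cos th^2) by nra.
  unfold Dxy. rewrite e. split; [|apply sqrt_pos].
  apply sq_sqrt'.
  replace (m ^ 2 * x ^ 2 + y ^ 2 - 2 * m * x * y * cos th - m ^ 2 * (1 - cos th ^ 2))
    with ((m*x*cos th - y)^2 + m^2*(x^2-1)*(1 - cos th^2)) by ring.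
  pose proof (COS_bound th). assert (0 <= 1 - cos th ^2) by nra.
  assert (0 <= m^2*(x^2-1)) by (apply Rmult_le_pos; nra).
  pose proof (pow2_ge_0 (m*x*cos th - y)). pose proof (Rmult_le_pos _ _ H1 H0). lra.
Qed.

Lemma Gf_weyl m y r th : 0 < m -> 2*m < r ->
  Gf m y (weyl_rho m r th) (weyl_z m r th) =
  if Req_dec_T y m then m * sqrt ((r/m-1)^2 - 1) / (m * (r/m - 1 - cos th))
  else eZ_formula m y (r/m - 1) th.
Proof.
  intros hm hr. destruct (XC_weyl m r th hm hr) as (e1 & e2 & e3).
  destruct (weyl_ab m r th y hm hr) as (_ & _ & e4).
  unfold Gf, eZ_formula, Nxy. rewrite e1, e2, e3, e4. reflexivity.
Qed.

Lemma rz_bound m r th : 0 < m -> 2*m < r ->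
  weyl_rho m r th ^2 + weyl_z m r th ^2 <= m^2 * (r/m-1)^2.
Proof.
  intros hm hr. rewrite weyl_rho2 by auto. unfold weyl_z.
  pose proof (COS_bound th). assert (0 <= 1 - cos th ^2) by nra.
  replace (m^2 * (r/m-1)^2) with ((r-m)^2) by (field; lra).
  replace (r ^ 2 * (1 - cos th ^ 2) * (1 - 2 * m / r) + ((r - m) * cos th) ^ 2)
    with ((r-m)^2 - m^2*(1 - cos th^2)) by (field; lra).
  assert (0 <= m^2*(1 - cos th^2)) by (apply Rmult_le_pos; nra). lra.
Qed.

Lemma Zf_inf m r0 y : 0 < m -> 2*m < r0 ->
  forall eps, 0 < eps -> exists M, forall rho z, exterior m r0 rho z ->
     M < rho ^ 2 + z ^ 2 -> Rabs (Zf m y rho z) < eps.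
Proof.
  intros hm hr0 eps he. pose proof (delta_pos eps he) as hδ. set (δ := 1 - exp (-eps)) in *.
  set (K := Rabs (y-m) + (2*Rabs y + m + y^2/m) + m).
  set (Xs := if Req_dec_T y m then 2 + 2/δ else 2 + K/(δ*Rabs (y-m))).
  assert (hXs : 2 <= Xs).
  { unfold Xs. destruct (Req_dec_T y m).
    - assert (0 <= 2/δ) by (apply Rmult_le_pos; [lra| left; apply Rinv_0_lt_compat; lra]). lra.
    - assert (0 < Rabs (y-m)) by (apply Rabs_pos_lt; lra).
      assert (0 <= K) by (unfold K; pose proof (Rabs_pos y); pose proof (pow2_ge_0 y);
        assert (0 <= y^2/m) by (apply Rmult_le_pos; [lra| left; apply Rinv_0_lt_compat; lra]); lra).
      assert (0 <= K/(δ*Rabs (y-m))) by (apply Rmult_le_pos; [lra| left; apply Rinv_0_lt_compat; nra]). lra. }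
  exists ((m*Xs)^2). intros rho z (r & th & hr & hth & -> & ->) hM.
  pose proof (rz_bound m r th hm ltac:(lra)) as hb.
  set (x := r/m - 1) in *.
  assert (hx1 : 1 < x) by (unfold x; apply (Rmult_lt_reg_r m); [lra|]; field_simplify; lra).
  assert (hxs : Xs < x).
  { assert (hh : (m*Xs)^2 < (m*x)^2) by (replace ((m*x)^2) with (m^2*x^2) by ring; lra).
    assert (0 < m*Xs) by nra. assert (0 < m*x) by nra.
    assert (m*Xs < m*x) by nra. apply (Rmult_lt_reg_l m); lra. }
  unfold Zf. rewrite Gf_weyl by lra. fold x.
  apply ln_small; auto. fold δ.
  pose proof (COS_bound th) as hc.
  unfold Xs in hxs. destruct (Req_dec_T y m) as [e|ne].
  - apply g_est_m; auto.
    assert (2/δ < x - 2) by lra.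
    assert (2 < δ*(x-2)).
    { apply (Rmult_lt_compat_l δ) in H; auto. replace (δ * (2/δ)) with 2 in H by (field; lra). lra. }
    nra.
  - destruct (Dxy_sq m y x th hx1 hm) as [hD2 hD0].
    unfold eZ_formula, Nxy. apply g_est_ne; auto.
    assert (hym : 0 < Rabs (y-m)) by (apply Rabs_pos_lt; lra).
    assert (K/(δ*Rabs (y-m)) < x - 2) by lra.
    assert (K < δ*Rabs (y-m)*(x-2)).
    { apply (Rmult_lt_compat_l (δ*Rabs (y-m))) in H; [|nra].
      replace (δ * Rabs (y - m) * (K / (δ * Rabs (y - m)))) with K in H by (field; lra). lra. }
    fold K. nra.
Qed.


Definition EE m r0 rho z := 0 < rho /\ r0 < m + (aa m rho z + bb m rho z)/2.

Lemma sqrt_mono_rho rho rho' w : 0 <= rho <= rho' -> sqrt (rho^2 + w) <= sqrt (rho'^2 + w).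
Proof. intros h. apply sqrt_le_1_alt. nra. Qed.

Lemma EE_mono m r0 rho rho' z : EE m r0 rho z -> rho <= rho' -> EE m r0 rho' z.
Proof.
  intros [h1 h2] h. split; [lra|]. unfold aa, bb in *.
  pose proof (sqrt_mono_rho rho rho' ((z+m)^2) ltac:(lra)).
  pose proof (sqrt_mono_rho rho rho' ((z-m)^2) ltac:(lra)). lra.
Qed.

Lemma sqrt_ge_rho rho w : 0 <= rho -> rho <= sqrt (rho^2 + w^2).
Proof.
  intros h. rewrite <- (sqrt_pow2 rho) at 1 by auto. apply sqrt_le_1_alt.
  pose proof (pow2_ge_0 w). lra.
Qed.

Lemma EE_far m r0 rho z : 0 < m -> r0 <= rho -> 0 < rho -> EE m r0 rho z.
Proof.
  intros hm h1 h2. split; auto. unfold aa, bb.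
  pose proof (sqrt_ge_rho rho (z+m) ltac:(lra)). pose proof (sqrt_ge_rho rho (z-m) ltac:(lra)). lra.
Qed.

Lemma cont_of_der (f : R -> R) x l : is_derive f x l -> continuity_pt f x.
Proof.
  intros h. apply derivable_continuous_pt. exists l. apply is_derive_Reals. exact h.
Qed.
Lemma const_interval (f : R -> R) a b : (forall x, Rmin a b <= x <= Rmax a b -> is_derive f x 0) -> f a = f b.
Proof.
  intros h. destruct (MVT_gen f a b (fun _ => 0)) as (c & _ & e).
  - intros x hx. apply h. split; left; apply hx.
  - intros x hx. apply (cont_of_der f x 0). apply h. auto.
  - rewrite Rmult_0_l in e. lra.
Qed.

Lemma F_const m r0 (F : R -> R -> R) : 0 < m ->
  (forall rho z, EE m r0 rho z -> is_derive (fun s => F s z) rho 0 /\ is_derive (fun t => F rho t) z 0) ->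
  forall r1 z1 r2 z2, EE m r0 r1 z1 -> EE m r0 r2 z2 -> F r1 z1 = F r2 z2.
Proof.
  intros hm hF r1 z1 r2 z2 h1 h2.
  set (rs := Rmax (Rmax r1 r2) (Rmax r0 1)).
  pose proof (Rmax_l r1 r2). pose proof (Rmax_r r1 r2). pose proof (Rmax_l r0 1). pose proof (Rmax_r r0 1).
  pose proof (Rmax_l (Rmax r1 r2) (Rmax r0 1)). pose proof (Rmax_r (Rmax r1 r2) (Rmax r0 1)).
  fold rs in H3, H4.
  clearbody rs.
  assert (hr1 : r1 <= rs) by lra.
  assert (hr2 : r2 <= rs) by lra.
  assert (hr0 : r0 <= rs) by lra.
  assert (hr3 : 1 <= rs) by lra.
  clear H H0 H1 H2 H3 H4.
  assert (horiz : forall ra za, EE m r0 ra za -> ra <= rs -> F ra za = F rs za).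
  { intros ra za ha hle. apply (const_interval (fun s => F s za)).
    intros x hx. rewrite Rmin_left in hx by auto. rewrite Rmax_right in hx by auto.
    assert (hE : EE m r0 x za) by (apply (EE_mono m r0 ra); [auto | apply hx]).
    exact (proj1 (hF x za hE)). }
  rewrite (horiz r1 z1 h1 hr1), (horiz r2 z2 h2 hr2).
  apply (const_interval (fun t => F rs t)).
  intros x hx. assert (hE : EE m r0 rs x) by (apply EE_far; auto; lra).
  exact (proj2 (hF rs x hE)).
Qed.


Lemma sin_facts th : 0 < th < PI -> 0 < 1 - cos th ^2 /\ sin th ^2 = 1 - cos th ^2.
Proof.
  intros h. pose proof (sin_gt_0 th (proj1 h) (proj2 h)).
  pose proof (sin2_cos2 th) as hsc. unfold Rsqr in hsc. split; nra.
Qed.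

Lemma D_pos m y x th : 0 < m -> 1 < x -> 0 < th < PI -> 0 < Dxy m y x th.
Proof.
  intros hm hx hth. destruct (Dxy_sq m y x th hx hm) as [h2 h0].
  destruct (sin_facts th hth) as [hs _].
  assert (0 < Dxy m y x th ^2).
  { rewrite h2. replace (m ^ 2 * x ^ 2 + y ^ 2 - 2 * m * x * y * cos th - m ^ 2 * (1 - cos th ^ 2))
    with ((m*x*cos th - y)^2 + m^2*(x^2-1)*(1 - cos th^2)) by ring.
    assert (0 < m^2*(x^2-1)) by (apply Rmult_lt_0_compat; nra).
    pose proof (pow2_ge_0 (m*x*cos th - y)). pose proof (Rmult_lt_0_compat _ _ H hs). lra. }
  destruct h0 as [h0|h0]; auto. rewrite <- h0 in H. simpl in H. lra.
Qed.

Lemma LD_id m y x th : 0 < m -> 1 < x ->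
  Dxy m y x th ^2 - (y*x - m*cos th)^2 = (m^2 - y^2)*(x^2-1).
Proof.
  intros hm hx. destruct (Dxy_sq m y x th hx hm) as [h2 _]. rewrite h2. ring.
Qed.

Lemma Q_pos m y x th : 0 < m -> 1 < x -> 0 < th < PI -> -m < y ->
  0 < y*x - m*cos th + Dxy m y x th.
Proof.
  intros hm hx hth hy. pose proof (D_pos m y x th hm hx hth) as hD.
  pose proof (LD_id m y x th hm hx) as hid. pose proof (COS_bound th) as hc.
  set (L := y*x - m*cos th) in *. set (D := Dxy m y x th) in *.
  destruct (Rle_dec 0 L); [lra|].
  assert (y < m).
  { destruct (Rlt_dec y m); auto. exfalso. assert (y*x >= m*x) by nra. unfold L in n. nra. }
  assert (0 < (m^2 - y^2)*(x^2-1)) by (apply Rmult_lt_0_compat; nra).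
  nra.
Qed.

Lemma Dxy_m m x th : 0 < m -> 1 < x -> Dxy m m x th = m*(x - cos th).
Proof.
  intros hm hx. destruct (Dxy_sq m m x th hx hm) as [h2 h0].
  pose proof (COS_bound th). apply sq_eq_pos; auto. nra. rewrite h2. ring.
Qed.

Lemma eZ_conj m y x th : 0 < m -> 1 < x -> 0 < th < PI -> -m < y -> y <> m ->
  eZ_formula m y x th = (y+m)*sqrt (x^2-1)/(y*x - m*cos th + Dxy m y x th).
Proof.
  intros hm hx hth hy hne. pose proof (Q_pos m y x th hm hx hth hy) as hQ.
  pose proof (LD_id m y x th hm hx) as hid.
  destruct (sqrt_x2m1 x hx) as ((hs1 & hs2) & hs3).
  unfold eZ_formula, Nxy. set (s := sqrt (x^2-1)) in *. set (D := Dxy m y x th) in *.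
  assert (e : y*x - m*cos th - D = (y^2 - m^2)*s^2/(y*x - m*cos th + D)).
  { rewrite hs3. apply (Rmult_eq_reg_r (y*x - m*cos th + D)); [|lra].
    field_simplify; [|lra]. nra. }
  rewrite e. field. repeat split; lra.
Qed.

Lemma Psi_conj m y x th : 0 < m -> 1 < x -> 0 < th < PI -> -m < y -> y <> m ->
  Psi_formula m y x th = ((y+m)*(x^2-1)/(y*x - m*cos th + Dxy m y x th))^2/((x+1)^2 * Dxy m y x th).
Proof.
  intros hm hx hth hy hne. pose proof (Q_pos m y x th hm hx hth hy) as hQ.
  pose proof (LD_id m y x th hm hx) as hid. pose proof (D_pos m y x th hm hx hth).
  unfold Psi_formula, Nxy. set (D := Dxy m y x th) in *.
  assert (e : y*x - m*cos th - D = (y^2 - m^2)*(x^2-1)/(y*x - m*cos th + D)).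
  { apply (Rmult_eq_reg_r (y*x - m*cos th + D)); [|lra].
    field_simplify; [|lra]. nra. }
  rewrite e. field. repeat split; lra.
Qed.

Lemma loc_ball m : 0 < m -> Rbar_locally' (Finite m) (fun y' => -m < y' /\ y' <> m).
Proof.
  intros hm. exists (mkposreal m hm). intros y' hb hne. split; auto.
  change (Rabs (y' - m) < m) in hb. apply Rabs_lt_between' in hb. lra.
Qed.

Lemma pos_of_sqrt u : 0 < sqrt u -> 0 < u.
Proof. intros h. destruct (Rle_dec u 0); [rewrite sqrt_neg_0 in h; lra | lra]. Qed.

Lemma cont_h m x th : 0 < m -> 1 < x -> 0 < th < PI ->
  continuity_pt (fun y' => (y'+m)*sqrt (x^2-1)/(y'*x - m*cos th + Dxy m y' x th)) m.
Proof.
  intros hm hx hth. pose proof (Q_pos m m x th hm hx hth ltac:(lra)) as hQ.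
  pose proof (D_pos m m x th hm hx hth) as hD.
  apply (cont_of_der _ _ (Derive (fun y' => (y'+m)*sqrt (x^2-1)/(y'*x - m*cos th + Dxy m y' x th)) m)).
  apply Derive_correct. unfold Dxy in *. auto_derive.
  replace (m * (m * 1) * (x * (x * 1)) + m * (m * 1) + - (2 * m * x * m * cos th) +
     - (m * (m * 1) * (sin th * (sin th * 1))))
   with (m ^ 2 * x ^ 2 + m ^ 2 - 2 * m * x * m * cos th - m ^ 2 * sin th ^ 2) by ring.
  repeat split; [apply pos_of_sqrt; auto | lra].
Qed.

Lemma lim_eZ m x th : 0 < m -> 1 < x -> 0 < th < PI ->
  is_lim (fun y' => eZ_formula m y' x th) m (m * sqrt (x^2-1) / (m * (x - cos th))).
Proof.
  intros hm hx hth.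
  apply is_lim_ext_loc with (f := fun y' => (y'+m)*sqrt (x^2-1)/(y'*x - m*cos th + Dxy m y' x th)).
  { eapply filter_imp; [|apply (loc_ball m hm)]. intros y' [h1 h2]. cbv beta.
    symmetry. apply eZ_conj; auto. }
  replace (m * sqrt (x^2-1) / (m * (x - cos th))) with
    ((m+m)*sqrt (x^2-1)/(m*x - m*cos th + Dxy m m x th)).
  2: { rewrite Dxy_m by auto. pose proof (COS_bound th). assert (0 < x - cos th) by lra. field. repeat split; nra. }
  apply (is_lim_continuity (fun y' => (y'+m)*sqrt (x^2-1)/(y'*x - m*cos th + Dxy m y' x th))).
  apply cont_h; auto.
Qed.

Lemma cont_h2 m x th : 0 < m -> 1 < x -> 0 < th < PI ->
  continuity_pt (fun y' => ((y'+m)*(x^2-1)/(y'*x - m*cos th + Dxy m y' x th))^2/((x+1)^2 * Dxy m y' x th)) m.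
Proof.
  intros hm hx hth. pose proof (Q_pos m m x th hm hx hth ltac:(lra)) as hQ.
  pose proof (D_pos m m x th hm hx hth) as hD.
  apply (cont_of_der _ _ (Derive (fun y' => ((y'+m)*(x^2-1)/(y'*x - m*cos th + Dxy m y' x th))^2/((x+1)^2 * Dxy m y' x th)) m)).
  apply Derive_correct. unfold Dxy in *. auto_derive.
  replace (m * (m * 1) * (x * (x * 1)) + m * (m * 1) + - (2 * m * x * m * cos th) +
     - (m * (m * 1) * (sin th * (sin th * 1))))
   with (m ^ 2 * x ^ 2 + m ^ 2 - 2 * m * x * m * cos th - m ^ 2 * sin th ^ 2) by ring.
  assert (0 < (x+1)*((x+1)*1)) by nra.
  repeat split; try apply pos_of_sqrt; auto; try lra.
  apply Rmult_integral_contrapositive_currified; lra.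
Qed.

Lemma lim_Psi m x th : 0 < m -> 1 < x -> 0 < th < PI ->
  is_lim (fun y' => Psi_formula m y' x th) m ((x-1)^2/(m*(x - cos th)^3)).
Proof.
  intros hm hx hth.
  apply is_lim_ext_loc with (f := fun y' => ((y'+m)*(x^2-1)/(y'*x - m*cos th + Dxy m y' x th))^2/((x+1)^2 * Dxy m y' x th)).
  { eapply filter_imp; [|apply (loc_ball m hm)]. intros y' [h1 h2]. cbv beta.
    symmetry. apply Psi_conj; auto. }
  replace ((x-1)^2/(m*(x - cos th)^3)) with
    (((m+m)*(x^2-1)/(m*x - m*cos th + Dxy m m x th))^2/((x+1)^2 * Dxy m m x th)).
  2: { rewrite Dxy_m by auto. pose proof (COS_bound th). assert (0 < x - cos th) by lra. field. repeat split; nra. }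
  apply (is_lim_continuity (fun y' => ((y'+m)*(x^2-1)/(y'*x - m*cos th + Dxy m y' x th))^2/((x+1)^2 * Dxy m y' x th))).
  apply cont_h2; auto.
Qed.


Lemma DU0 (m : R) (U0 : R -> R -> R) rho z : 0 < m ->
  (forall r th, 2 * m < r -> 0 <= th <= PI ->
     U0 (weyl_rho m r th) (weyl_z m r th) = / 2 * ln (1 - 2 * m / r)) ->
  0 < rho ->
  Derive (fun s => U0 s z) rho = Uder m (aa m rho z) (bb m rho z) (rho / aa m rho z) (rho / bb m rho z) /\
  Derive (fun t => U0 rho t) z = Uder m (aa m rho z) (bb m rho z) ((z+m) / aa m rho z) ((z-m) / bb m rho z).
Proof.
  intros hm hU hr. split.
  - rewrite (Derive_ext_loc (fun s => U0 s z) (fun s => U0f m s z)).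
    + apply is_derive_unique. apply U0f_der_r; auto.
    + eapply filter_imp; [|apply (loc_pos rho hr)]. intros s hs. apply U0_eq; auto.
  - rewrite (Derive_ext (fun t => U0 rho t) (fun t => U0f m rho t)).
    + apply is_derive_unique. apply U0f_der_z; auto.
    + intros t. apply U0_eq; auto.
Qed.

Lemma Zf_sol m r0 (U0 : R -> R -> R) y : 0 < m -> 2 * m < r0 ->
  (forall r th, 2 * m < r -> 0 <= th <= PI ->
     U0 (weyl_rho m r th) (weyl_z m r th) = / 2 * ln (1 - 2 * m / r)) ->
  is_Zsol m r0 U0 y (Zf m y).
Proof.
  intros hm hr0 hU. split.
  - intros rho z hext hr. cbv zeta.
    destruct (DU0 m U0 rho z hm hU hr) as [e1 e2].
    unfold fadd, fscal, hstar, dfun, cosUps, sinUps. simpl fst. simpl snd.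
    rewrite e1, e2. apply Zf_der; auto.
  - apply Zf_inf; auto.
Qed.

Lemma small_zero u : (forall eps, 0 < eps -> Rabs u < 2*eps) -> u = 0.
Proof.
  intros h. destruct (Req_dec u 0) as [e|n]; auto.
  assert (0 < Rabs u) by (apply Rabs_pos_lt; auto).
  specialize (h (Rabs u / 4) ltac:(lra)). lra.
Qed.

Lemma Z_eq m r0 (U0 : R -> R -> R) y Z : 0 < m -> 2 * m < r0 ->
  (forall r th, 2 * m < r -> 0 <= th <= PI ->
     U0 (weyl_rho m r th) (weyl_z m r th) = / 2 * ln (1 - 2 * m / r)) ->
  is_Zsol m r0 U0 y Z ->
  forall rho z, exterior m r0 rho z -> 0 < rho -> Z rho z = Zf m y rho z.
Proof.
  intros hm hr0 hU hZ rho z hext hr.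
  destruct (Zf_sol m r0 U0 y hm hr0 hU) as [hf1 hf2].
  destruct hZ as [hz1 hz2].
  set (F := fun a b => Z a b - Zf m y a b).
  assert (hF : forall a b, EE m r0 a b -> is_derive (fun s => F s b) a 0 /\ is_derive (fun t => F a t) b 0).
  { intros a b [ha hb]. assert (he : exterior m r0 a b) by (apply ext_iff; auto).
    destruct (hz1 a b he ha) as [d1 d2]. destruct (hf1 a b he ha) as [d3 d4].
    split.
    - pose proof (is_derive_minus _ _ _ _ _ d1 d3) as d. unfold F.
      eapply is_derive_ext; [intros t; reflexivity|].
      replace (0 : R) with (minus (fst (fadd (fscal (cosUps y a b) (dfun U0 a b)) (fscal (sinUps y a b) (hstar (dfun U0 a b)))))
          (fst (fadd (fscal (cosUps y a b) (dfun U0 a b)) (fscal (sinUps y a b) (hstar (dfun U0 a b)))))).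
      2: { rewrite minus_eq_zero. reflexivity. }
      exact d.
    - pose proof (is_derive_minus _ _ _ _ _ d2 d4) as d. unfold F.
      eapply is_derive_ext; [intros t; reflexivity|].
      replace (0 : R) with (minus (snd (fadd (fscal (cosUps y a b) (dfun U0 a b)) (fscal (sinUps y a b) (hstar (dfun U0 a b)))))
          (snd (fadd (fscal (cosUps y a b) (dfun U0 a b)) (fscal (sinUps y a b) (hstar (dfun U0 a b)))))).
      2: { rewrite minus_eq_zero. reflexivity. }
      exact d. }
  assert (hp : EE m r0 rho z) by (split; auto; apply ext_iff; auto).
  cut (F rho z = 0). { unfold F. lra. }
  apply small_zero. intros eps he.
  destruct (hz2 eps he) as [M1 hM1]. destruct (hf2 eps he) as [M2 hM2].
  set (rq := Rmax (Rmax M1 M2) (Rmax r0 1) + 1).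
  pose proof (Rmax_l M1 M2). pose proof (Rmax_r M1 M2). pose proof (Rmax_l r0 1). pose proof (Rmax_r r0 1).
  pose proof (Rmax_l (Rmax M1 M2) (Rmax r0 1)). pose proof (Rmax_r (Rmax M1 M2) (Rmax r0 1)).
  assert (h1 : M1 < rq) by (unfold rq; lra). assert (h2 : M2 < rq) by (unfold rq; lra).
  assert (h3 : r0 < rq) by (unfold rq; lra). assert (h4 : 1 < rq) by (unfold rq; lra).
  clearbody rq. clear H H0 H1 H2 H3 H4.
  assert (hq : EE m r0 rq 0) by (apply EE_far; lra).
  assert (hqe : exterior m r0 rq 0) by (apply ext_iff; try lra; apply hq).
  rewrite (F_const m r0 F hm hF rho z rq 0 hp hq).
  assert (hsq : rq < rq^2 + 0^2) by nra.
  specialize (hM1 rq 0 hqe ltac:(lra)). specialize (hM2 rq 0 hqe ltac:(lra)).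
  unfold F. unfold Rminus. eapply Rle_lt_trans; [apply Rabs_triang|]. rewrite Rabs_Ropp. lra.
Qed.

Theorem mainTheorem10 (m r0 : R) (U0 : R -> R -> R) :
  0 < m -> 2 * m < r0 ->
  (forall r th, 2 * m < r -> 0 <= th <= PI ->
     U0 (weyl_rho m r th) (weyl_z m r th) = / 2 * ln (1 - 2 * m / r)) ->
  forall y : R, - (m * (r0 / m - 1)) < y < m * (r0 / m - 1) ->
  (exists Z, is_Zsol m r0 U0 y Z) /\
  (forall Z, is_Zsol m r0 U0 y Z ->
   forall r th, r0 < r -> 0 < th < PI ->
     (y <> m ->
        exp (- Z (weyl_rho m r th) (weyl_z m r th)) = eZ_formula m y (r / m - 1) th /\
        Psi U0 Z y (weyl_rho m r th) (weyl_z m r th) = Psi_formula m y (r / m - 1) th) /\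
     (y = m ->
        is_lim (fun y' => eZ_formula m y' (r / m - 1) th) m
               (exp (- Z (weyl_rho m r th) (weyl_z m r th))) /\
        is_lim (fun y' => Psi_formula m y' (r / m - 1) th) m
               (Psi U0 Z y (weyl_rho m r th) (weyl_z m r th))) /\
     psi y (weyl_rho m r th) (weyl_z m r th) = psi_formula m y (r / m - 1) th).
Proof.
  intros hm hr0 hU y hy. split.
  { exists (Zf m y). apply Zf_sol; auto. }
  intros Z hZ r th hr hth.
  assert (hr2 : 2*m < r) by lra.
  assert (hq : 0 < 1 - 2*m/r).
  { assert (2*m/r < 1). { apply (Rmult_lt_reg_r r); try lra. field_simplify; lra. } lra. }
  assert (hrho : 0 < weyl_rho m r th).
  { unfold weyl_rho. apply Rmult_lt_0_compat; [apply Rmult_lt_0_compat|].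
    - lra.
    - apply sin_gt_0; apply hth.
    - apply sqrt_lt_R0; auto. }
  assert (hext : exterior m r0 (weyl_rho m r th) (weyl_z m r th)).
  { exists r, th. repeat split; lra. }
  pose proof (Z_eq m r0 U0 y Z hm hr0 hU hZ _ _ hext hrho) as eZ.
  pose proof (Gf_pos m y _ (weyl_z m r th) hm hrho) as hG.
  pose proof (Gf_weyl m y r th hm hr2) as gw.
  destruct (weyl_ab m r th y hm hr2) as (_ & _ & ed).
  assert (hU0p : U0 (weyl_rho m r th) (weyl_z m r th) = /2 * ln (1 - 2*m/r)) by (apply hU; lra).
  set (rho := weyl_rho m r th) in *. set (z := weyl_z m r th) in *.
  assert (eexp : exp (- Z rho z) = Gf m y rho z).
  { rewrite eZ. unfold Zf. rewrite Ropp_involutive. apply exp_ln; auto. }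
  set (x := r/m - 1) in *.
  assert (hx : 1 < x) by (unfold x; apply (Rmult_lt_reg_r m); [lra|]; field_simplify; lra).
  assert (er : r = m*(x+1)) by (unfold x; field; lra).
  pose proof (D_pos m y x th hm hx hth) as hD.
  destruct (sqrt_x2m1 x hx) as ((hs1 & hs2) & hs3).
  assert (ePsi : Psi U0 Z y rho z = (1 - 2*m/r) * (Gf m y rho z)^2 / Dxy m y x th).
  { unfold Psi. rewrite ed, hU0p, eZ. unfold Zf. f_equal.
    replace (2 * (/ 2 * ln (1 - 2 * m / r)) - 2 * - ln (Gf m y rho z))
      with (ln (1 - 2 * m / r) + (ln (Gf m y rho z) + ln (Gf m y rho z))) by field.
    rewrite !exp_plus, !exp_ln by auto. ring. }
  split; [|split].
  - intros hne. rewrite eexp, ePsi, gw. destruct (Req_dec_T y m) as [e|_]; [congruence|].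
    split; [reflexivity|].
    unfold eZ_formula, Psi_formula. set (N := Nxy m y x th). set (s := sqrt (x^2-1)) in *.
    rewrite er.
    replace ((N / ((y - m) * s))^2) with (N^2/((y-m)^2 * s^2)) by (field; split; lra).
    rewrite hs3. assert (x^2 - 1 <> 0) by nra. field. repeat split; try lra.
  - intros he. rewrite he in *. rewrite gw in eexp, ePsi. destruct (Req_dec_T m m) as [_|n]; [|congruence].
    split.
    + rewrite eexp. apply lim_eZ; auto.
    + rewrite ePsi. rewrite Dxy_m by auto.
      pose proof (COS_bound th). assert (0 < x - cos th) by lra.
      set (s := sqrt (x^2-1)) in *.
      replace ((1 - 2 * m / r) * (m * s / (m * (x - cos th))) ^ 2 / (m * (x - cos th)))
        with ((x-1)^2/(m*(x - cos th)^3)).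
      * apply lim_Psi; auto.
      * rewrite er.
        replace ((m * s / (m * (x - cos th))) ^ 2) with (s^2/(x - cos th)^2) by (field; split; lra).
        rewrite hs3. field. repeat split; lra.
  - unfold psi, psi_formula. rewrite ed. reflexivity.
Qed.
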